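(* Let $E$ be an Archimedean vector lattice and let $F$ be an order dense vector sublattice of $E$. Suppose $F$ has the countable sup property. Then $E$ has the countable sup property in each of the following cases: (a) $F$ is majorizing in $E$; (b) $F$ has a weak unit.
   Context: A sublattice $F$ of $E$ is order dense if for every $x\in E$ with $x>0$ there is $y\in F$ with $0<y\le x$; it is majorizing if for every $x\in E$ there is $y\in F$ with $x\le y$. A vector $e\ge 0$ in $F$ is a weak unit of $F$ if $|x|\wedge e=0$, $x\in F$, implies $x=0$. A vector lattice has the countable sup property if every nonempty subset possessing a supremum contains a countable subset with the same supremum. *)

(* Defs.v *)
From mathcomp Require Import all_boot all_order all_algebra.
From mathcomp Require Import boolp classical_sets cardinality reals.
Set Implicit Arguments. Unset Strict Implicit. Unset Printing Implicit Defensive.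
Import Order.TTheory GRing.Theory Num.Theory.
Local Open Scope classical_set_scope.
Local Open Scope ring_scope.

Section VL.
Variables (R : realType) (E : lmodType R) (le : E -> E -> Prop).

Definition lt (x y : E) : Prop := le x y /\ x <> y.

Definition is_sup_in (S A : set E) (x : E) : Prop :=
  S x /\ (forall a, A a -> le a x) /\
  (forall y, S y -> (forall a, A a -> le a y) -> le x y).

Definition is_inf_in (S A : set E) (x : E) : Prop :=
  S x /\ (forall a, A a -> le x a) /\
  (forall y, S y -> (forall a, A a -> le y a) -> le y x).

Definition pair_set (x y : E) : set E := [set z | z = x \/ z = y].

Definition is_vector_lattice : Prop :=
  (forall x, le x x) /\
  (forall x y, le x y -> le y x -> x = y) /\
  (forall x y z, le x y -> le y z -> le x z) /\
  (forall x y z, le x y -> le (x + z) (y + z)) /\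
  (forall (a : R) x y, 0 <= a -> le x y -> le (a *: x) (a *: y)) /\
  (forall x y, exists s, is_sup_in setT (pair_set x y) s).

Definition archimedean_vl : Prop :=
  forall x y : E, (forall n : nat, le 0 (n%:R *: x) /\ le (n%:R *: x) y) -> x = 0.

Definition is_vector_sublattice (F : set E) : Prop :=
  [/\ F 0,
      (forall x y, F x -> F y -> F (x + y)),
      (forall (a : R) x, F x -> F (a *: x))
    & (forall x y s, F x -> F y -> is_sup_in setT (pair_set x y) s -> F s)].

Definition order_dense (F : set E) : Prop :=
  forall x, lt 0 x -> exists y, F y /\ lt 0 y /\ le y x.

Definition majorizing (F : set E) : Prop :=
  forall x, exists y, F y /\ le x y.

Definition weak_unit (F : set E) (e : E) : Prop :=
  [/\ F e, le 0 e &
      forall x ax m, F x -> is_sup_in setT (pair_set x (- x)) ax ->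
        is_inf_in setT (pair_set ax e) m -> m = 0 -> x = 0].

Definition countable_sup_property (S : set E) : Prop :=
  forall (A : set E) (x : E), A `<=` S -> A !=set0 -> is_sup_in S A x ->
    exists B : set E, [/\ B `<=` A, countable B & is_sup_in S B x].

End VL.

(* Main.v *)
Require Import Defs.
From mathcomp Require Import all_boot all_order all_algebra.
From mathcomp Require Import boolp classical_sets cardinality reals.
Set Implicit Arguments. Unset Strict Implicit.
Import GRing.Theory Num.Theory.
Local Open Scope classical_set_scope.
Local Open Scope ring_scope.

Section Aux.
Variables (R : realType) (E : lmodType R) (le : E -> E -> Prop).
Hypothesis Hrefl : forall x, le x x.
Hypothesis Hanti : forall x y, le x y -> le y x -> x = y.
Hypothesis Htrans : forall x y z, le x y -> le y z -> le x z.
Hypothesis Hadd : forall x y z, le x y -> le (x + z) (y + z).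
Hypothesis Hscale : forall (a : R) x y, 0 <= a -> le x y -> le (a *: x) (a *: y).

Lemma le_eqE a b a' b' : le a b -> a = a' -> b = b' -> le a' b'.
Proof. by move=> h <- <-. Qed.

Lemma leD a b c d : le a b -> le c d -> le (a + c) (b + d).
Proof.
move=> h1 h2; apply: (Htrans (Hadd c h1)).
by apply: (le_eqE (Hadd b h2)); rewrite addrC.
Qed.

Lemma le_sub0 a b : le a b <-> le 0 (b - a).
Proof.
split=> h.
  by apply: (le_eqE (Hadd (- a) h)); rewrite ?subrr.
by apply: (le_eqE (Hadd a h)); rewrite ?add0r ?subrK.
Qed.

Lemma le_opp a b : le a b -> le (- b) (- a).
Proof.
move=> h; apply: (le_eqE (Hadd (- a - b) h)).
  by rewrite addrA subrr add0r.
by rewrite addrC subrK.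
Qed.

Lemma le_oppK a b : le (- b) (- a) -> le a b.
Proof. by move=> /le_opp; rewrite !opprK. Qed.

Lemma le_nat (f : E) n : le 0 f -> le 0 (n%:R *: f).
Proof.
move=> h; have := Hscale (ler0n R n) h; by rewrite scaler0.
Qed.

Lemma le_ltsub a b : le b a -> a <> b -> lt le 0 (a - b).
Proof.
move=> h ne; split; first by have := (proj1 (le_sub0 b a)) h.
by move=> /esym /subr0_eq /ne.
Qed.

Hypothesis Hsup : forall x y, exists s, is_sup_in le setT (pair_set x y) s.

Definition jn x y := projT1 (@choice (E * E) E
  (fun p s => is_sup_in le setT (pair_set p.1 p.2) s) (fun p => Hsup p.1 p.2)) (x, y).

Lemma jnP x y : is_sup_in le setT (pair_set x y) (jn x y).
Proof. exact: (projT2 (@choice (E * E) E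
  (fun p s => is_sup_in le setT (pair_set p.1 p.2) s) (fun p => Hsup p.1 p.2)) (x, y)). Qed.

Lemma J1 x y : le x (jn x y).
Proof. by case: (jnP x y) => _ [h _]; apply: h; left. Qed.
Lemma J2 x y : le y (jn x y).
Proof. by case: (jnP x y) => _ [h _]; apply: h; right. Qed.
Lemma J3 x y z : le x z -> le y z -> le (jn x y) z.
Proof. by case: (jnP x y) => _ [_ h] hx hy; apply: h => // a [->|->]. Qed.

Definition mt x y := x + y - jn x y.

Lemma M1 x y : le (mt x y) x.
Proof.
apply: (le_eqE (Hadd (x - jn x y) (J2 x y))).
  by rewrite /mt addrCA addrA.
by rewrite addrC subrK.
Qed.

Lemma M2 x y : le (mt x y) y.
Proof.
apply: (le_eqE (Hadd (y - jn x y) (J1 x y))).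
  by rewrite /mt addrA.
by rewrite addrC subrK.
Qed.

Lemma M3 m x y : le m x -> le m y -> le m (mt x y).
Proof.
move=> hx hy.
have h1 : le x (x + y - m).
  apply: (le_eqE (Hadd (x - m) hy)); first by rewrite addrC subrK.
  by rewrite addrCA addrA.
have h2 : le y (x + y - m).
  apply: (le_eqE (Hadd (y - m) hx)); first by rewrite addrC subrK.
  by rewrite addrA.
apply: (le_eqE (Hadd (m - jn x y) (J3 h1 h2))); first by rewrite addrC subrK.
by rewrite /mt addrA subrK.
Qed.

Variable F : set E.
Hypothesis F0 : F 0.
Hypothesis FD : forall x y, F x -> F y -> F (x + y).
Hypothesis FZ : forall (a : R) x, F x -> F (a *: x).
Hypothesis Hd : order_dense le F.
Hypothesis HA : archimedean_vl le.
Hypothesis Hcsp : countable_sup_property le F.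

Lemma FN x : F x -> F (- x).
Proof. by move=> h; rewrite -scaleN1r; apply: FZ. Qed.

Lemma L1 a z y0 : F y0 -> le y0 a -> (forall y, F y -> le y a -> le y z) -> le a z.
Proof.
move=> Fy0 hy0 hz.
pose z' := mt z a.
have hz'a : le z' a := M2 z a.
have hz'z : le z' z := M1 z a.
have up : forall y, F y -> le y a -> le y z'.
  by move=> y Fy hy; apply: M3 => //; apply: hz.
case: (EM (a = z')) => [->//|ne].
have [f [Ff [[f0 fne] fle]]] := Hd (le_ltsub hz'a ne).
have ind : forall n : nat, le (y0 + n%:R *: f) z'.
  elim=> [|n IH]; first by rewrite scale0r addr0; apply: up.
  rewrite -natr1 scalerDl scale1r addrA; apply: up.
    by apply: FD => //; apply: FD => //; exact: FZ.
  apply: (le_eqE (leD IH fle)) => //.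
  by rewrite addrC subrK.
exfalso; apply: fne; apply: esym.
apply: (HA (y := z' - y0)) => n; split; first exact: le_nat.
apply: (le_eqE (Hadd (- y0) (ind n))) => //.
by rewrite addrC addKr.
Qed.

Lemma L1dual x u v : F u -> le x u -> (forall w, F w -> le x w -> le v w) -> le v x.
Proof.
move=> Fu hu hv; apply: le_oppK.
apply: (L1 (FN Fu) (le_opp hu)) => y Fy hy.
have : le v (- y).
  apply: hv; first exact: FN.
  by have := le_opp hy; rewrite opprK.
by move=> /le_opp; rewrite opprK.
Qed.

Lemma G (A : set E) (phi : E -> E) x a0 : A a0 ->
  is_sup_in le setT (phi @` A) x ->
  (forall a, A a -> exists f, F f /\ le f (phi a)) ->
  (exists u, F u /\ le x u) ->
  exists B, [/\ B `<=` A, countable B & is_sup_in le setT (phi @` B) x].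
Proof.
move=> Aa0 [_ [xub xl]] lowb [u [Fu hu]].
have phix : forall a, A a -> le (phi a) x by move=> a Aa; apply: xub; exists a.
pose D := [set y | F y /\ exists a, A a /\ le y (phi a)].
pose U := [set w | F w /\ le x w].
pose S := [set s | exists d w, D d /\ U w /\ s = d - w].
have SF : S `<=` F by move=> s [d [w [[Fd _] [[Fw _] ->]]]]; apply: FD => //; exact: FN.
have Sne : S !=set0.
  have [f0 [Ff0 hf0]] := lowb a0 Aa0.
  by exists (f0 - u), f0, u; split; [split=> //; exists a0 | split].
have Sle0 : forall s, S s -> le s 0.
  move=> s [d [w [[Fd [a [Aa hd]]] [[Fw hw] ->]]]].
  have hdw : le d w := Htrans hd (Htrans (phix a Aa) hw).
  by apply: (le_eqE (Hadd (- w) hdw)) => //; rewrite subrr.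
have Ssup : is_sup_in le F S 0.
  split; first exact: F0.
  split; first exact: Sle0.
  move=> y Fy hy.
  have hD : forall d, D d -> le d (x + y).
    move=> d Dd.
    have : le (d - y) x.
      apply: (L1dual Fu hu) => w Fw hw.
      have hs : le (d - w) y by apply: hy; exists d, w.
      apply: (le_eqE (Hadd (w - y) hs)); first by rewrite addrA subrK.
      by rewrite addrC subrK.
    by move=> /(Hadd y); rewrite subrK.
  have hA : forall a, A a -> le (phi a) (x + y).
    move=> a Aa; have [f0 [Ff0 hf0]] := lowb a Aa.
    apply: (L1 Ff0 hf0) => y' Fy' hy'; apply: hD; split => //; by exists a.
  have : le x (x + y).
    by apply: xl => // _ [a Aa <-]; exact: hA.
  move=> /(Hadd (- x)); rewrite subrr => h.
  by apply: (le_eqE h) => //; rewrite addrC addKr.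
have [B' [B'S cB' [_ [B'le B'l]]]] := Hcsp SF Sne Ssup.
have hex : forall s, exists b, B' s ->
   A b /\ exists d w, le d (phi b) /\ le x w /\ s = d - w.
  move=> s; case: (EM (B' s)) => [Bs|nBs]; last by exists a0.
  have [d [w [[Fd [a [Aa hd]]] [[Fw hw] ->]]]] := B'S s Bs.
  by exists a => _; split => //; exists d, w.
have [g hg] := choice hex.
exists (g @` B'); split.
- by move=> _ [s Bs <-]; exact: (hg s Bs).1.
- exact: (sub_countable (card_image_le g B') cB').
- split => //; split.
    by move=> _ [_ [s Bs <-] <-]; apply: phix; exact: (hg s Bs).1.
  move=> z _ hz.
  have hs : forall s, B' s -> le s (z - x).
    move=> s Bs; have [Aa [d [w [hd [hw ->]]]]] := hg s Bs.
    have hdz : le d z.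
      apply: (Htrans hd); apply: hz; exists (g s) => //; exists s => //.
    apply: (Htrans (Hadd (- w) hdz)).
    exact: (leD (Hrefl z) (le_opp hw)).
  pose v := z - x; pose m := mt v 0.
  have hsm : forall s, B' s -> le s m.
    by move=> s Bs; apply: M3; [exact: hs | exact: B'le].
  case: (EM (m = 0)) => [m0|mne].
    have : le 0 v by rewrite -m0; exact: M1.
    by move=> /(Hadd x); rewrite add0r subrK.
  have hm0 : le m 0 := M2 v 0.
  have hlt : lt le 0 (- m).
    split; first by have := le_opp hm0; rewrite oppr0.
    by move=> h; apply: mne; rewrite -[m]opprK -h oppr0.
  have [f [Ff [[f0 fne] fle]]] := Hd hlt.
  have : le 0 (- f).
    apply: B'l; first exact: FN.
    move=> s Bs; apply: (Htrans (hsm s Bs)).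
    by have := le_opp fle; rewrite opprK.
  move=> /le_opp; rewrite opprK oppr0 => hf.
  by exfalso; apply: fne; apply: Hanti.
Qed.

Lemma W e : weak_unit le F e -> forall x' v, le 0 x' ->
  (forall n : nat, le (mt x' (n%:R *: e)) v) -> le x' v.
Proof.
move=> [Fe e0 Hw] x' v x0 hn.
pose v' := mt v x'.
have hv'x : le v' x' := M2 v x'.
have hv'v : le v' v := M1 v x'.
have hn' : forall n : nat, le (mt x' (n%:R *: e)) v'.
  by move=> n; apply: M3; [exact: hn | exact: M1].
pose w := x' - v'.
pose m := mt w e.
have w0 : le 0 w by exact: (proj1 (le_sub0 v' x') hv'x).
have m0 : le 0 m by apply: M3.
have mw : le m w := M1 w e.
have me : le m e := M2 w e.
have ind : forall k : nat, le (k%:R *: m) x'.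
  elim=> [|k IH]; first by rewrite scale0r.
  have h1 : le (k%:R *: m) (mt x' (k%:R *: e)).
    by apply: M3 => //; exact: Hscale (ler0n _ _) me.
  have h2 : le m (x' - mt x' (k%:R *: e)).
    exact: (Htrans mw (leD (Hrefl x') (le_opp (hn' k)))).
  rewrite -natr1 scalerDl scale1r.
  apply: (le_eqE (leD h1 h2)) => //.
  by rewrite addrC subrK.
have mz : m = 0.
  by apply: (HA (y := x')) => n; split; [exact: le_nat | exact: ind].
case: (EM (w = 0)) => [w0'|wne].
  by have -> : x' = v' by apply: subr0_eq.
have hne : x' <> v' by move=> h; apply: wne; rewrite /w h subrr.
have [f [Ff [[f0 fne] fw]]] := Hd (le_ltsub hv'x hne).
exfalso; apply: fne; apply: esym.
apply: (Hw f f 0 Ff) => //.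
- split => //; split.
    move=> a [->|->]; first exact: Hrefl.
    by apply: (Htrans _ f0); have := le_opp f0; rewrite oppr0.
  by move=> y _ hy; apply: hy; left.
- split => //; split.
    by move=> a [->|->].
  move=> y _ hy; rewrite -mz; apply: M3.
    exact: (Htrans (hy f (or_introl erefl)) fw).
  exact: (hy e (or_intror erefl)).
Qed.

Lemma main_aux : (majorizing le F \/ exists e, weak_unit le F e) ->
  countable_sup_property le setT.
Proof.
move=> hcase A x _ [a0 Aa0] hsup.
case: hcase => [Hmaj | [e He]].
  have hlow : forall a, A a -> exists f, F f /\ le f a.
    move=> a _; have [u [Fu hu]] := Hmaj (- a); exists (- u); split.
      exact: FN.
    by have := le_opp hu; rewrite opprK.
  have hs : is_sup_in le setT ((fun a => a) @` A) x by rewrite image_id.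
  have [B [BA cB hB]] := @G A (fun a => a) x a0 Aa0 hs hlow (Hmaj x).
  by exists B; split => //; rewrite image_id in hB.
have He' := He; case: He' => Fe e0 _.
case: hsup => _ [xub xl].
pose x' := x - a0.
have a0x : le a0 x := xub a0 Aa0.
have x'0 : le 0 x' by exact: (proj1 (le_sub0 a0 x) a0x).
pose phi (n : nat) a := mt (jn a a0 - a0) (n%:R *: e).
have step : forall n : nat, exists Bn, [/\ Bn `<=` A, countable Bn &
    is_sup_in le setT (phi n @` Bn) (mt x' (n%:R *: e))].
  move=> n; apply: (@G A (phi n) _ a0 Aa0).
  - split => //; split.
      move=> _ [a Aa <-]; apply: M3; last exact: M2.
      exact: (Htrans (M1 _ _) (Hadd (- a0) (J3 (xub a Aa) a0x))).
    move=> v _ hv.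
    pose ne := n%:R *: e.
    pose K := v + jn x' ne - ne.
    have hc : forall a, A a -> le a (K + a0).
      move=> a Aa; pose c := jn a a0 - a0.
      have h1 : le (mt c ne) v by apply: hv; exists a.
      have cx : le c x' := Hadd (- a0) (J3 (xub a Aa) a0x).
      have h2 : le (jn c ne) (jn x' ne) := J3 (Htrans cx (J1 x' ne)) (J2 x' ne).
      have h3 : le c K.
        apply: (le_eqE (Hadd (- ne) (leD h1 h2))) => //.
        by rewrite /mt subrK addrK.
      have h4 : le (a - a0) K := Htrans (Hadd (- a0) (J1 a a0)) h3.
      by have := Hadd a0 h4; rewrite subrK.
    have : le x (K + a0) by apply: xl.
    move=> /(Hadd (- a0)); rewrite addrK => hK.
    apply: (le_eqE (Hadd (ne - jn x' ne) hK)); first by rewrite /mt addrA.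
    by rewrite /K addrA subrK addrK.
  - move=> a Aa; exists 0; split => //; apply: M3; last exact: le_nat.
    exact: (proj1 (le_sub0 a0 (jn a a0)) (J2 a a0)).
  - by exists (n%:R *: e); split; [exact: FZ | exact: M2].
have [Bn HBn] := choice step.
pose C (n : nat) := if n is k.+1 then Bn k else [set a0].
have BA : \bigcup_(n in setT) C n `<=` A.
  move=> a [[|k] _ /= h]; first by rewrite h.
  by case: (HBn k) => BA _ _; exact: BA.
exists (\bigcup_(n in setT) C n); split => //.
  apply: bigcup_countable => // [[|k]] _ /=; first exact: countable1.
  by case: (HBn k).
split => //; split.
  by move=> a /BA; exact: xub.
move=> z _ hz.
have a0z : le a0 z by apply: hz; exists 0.
have hzn : forall n : nat, le (mt x' (n%:R *: e)) (z - a0).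
  move=> n; case: (HBn n) => _ _ [_ [_ hl]].
  apply: hl => // _ [b Bb <-].
  apply: (Htrans (M1 _ _)); apply: Hadd; apply: J3 => //.
  by apply: hz; exists n.+1.
have := W He x'0 hzn.
by move=> /(Hadd a0); rewrite !subrK.
Qed.

End Aux.

Theorem theorem4p5 (R : realType) (E : lmodType R) (le : E -> E -> Prop)
  (HE : is_vector_lattice le) (HA : archimedean_vl le)
  (F : set E) (HF : is_vector_sublattice le F) (Hd : order_dense le F)
  (Hcsp : countable_sup_property le F) :
  (majorizing le F \/ exists e, weak_unit le F e) ->
  countable_sup_property le setT.
Proof.
case: HE => Hrefl [Hanti [Htrans [Hadd [Hscale Hsup]]]].
case: HF => F0 FD FZ _.
exact: (main_aux Hrefl Hanti Htrans Hadd Hscale Hsup F0 FD FZ Hd HA Hcsp).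
Qed.
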